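(* Let $\alpha: I\to M$ be a unit-speed curve on an oriented surface $M\subset E^3$ with Darboux frame $\{T,V,U\}$ and curvatures $k_g,k_n,\tau_g$. Consider the curve $\gamma$ defined in either of the following two cases: (a) $k_n\equiv0$, $k_g$ and $\tau_g$ nowhere zero, and $\gamma(s)=\alpha(s)+\frac{1}{k_g(s)}V(s)-\frac{k_g'(s)}{k_g(s)^2\tau_g(s)}U(s)$; (b) $k_n$ nowhere zero, $\beta$ an antiderivative of $k_g\tau_g/k_n$, $B$ an antiderivative of $e^{\beta}\tau_g/k_n$, $c_8$ a real constant, $y_2=e^{-\beta}(B+c_8)$, $y_3=-\frac{k_g}{k_n}y_2+\frac{1}{k_n}$, and $\gamma(s)=\alpha(s)+y_2(s)V(s)+y_3(s)U(s)$. In either case assume $\gamma$ is regular. Then $\gamma$ is a general helix if and only if $\alpha$ is an isophote curve on $M$.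
   Context: $M$ is an oriented surface in Euclidean 3-space $E^3$ and $\alpha:I\to M$ is a unit-speed curve with arc-length parameter $s$. Its Darboux frame $\{T,V,U\}$ consists of the unit tangent $T=\alpha'$, the unit surface normal $U$ of $M$ along $\alpha$, and $V=U\times T$; it satisfies $T'=k_gV+k_nU$, $V'=-k_gT+\tau_gU$, $U'=-k_nT-\tau_gV$, where $k_g,k_n,\tau_g$ are the geodesic curvature, normal curvature and geodesic torsion. A regular curve is a general helix if its unit tangent makes a constant angle with a fixed direction. $\alpha$ is an isophote curve if $\langle U,l\rangle$ is constant for some fixed unit vector $l$. *)

(* Defs.v *)
From Stdlib Require Import Reals.
From Coquelicot Require Import Coquelicot.
Open Scope R_scope.

Definition vec := (R * R * R)%type.
Definition vx (v : vec) : R := fst (fst v).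
Definition vy (v : vec) : R := snd (fst v).
Definition vz (v : vec) : R := snd v.
Definition mkv (a b c : R) : vec := (a, b, c).
Definition vzero : vec := mkv 0 0 0.
Definition vadd (u v : vec) : vec := mkv (vx u + vx v) (vy u + vy v) (vz u + vz v).
Definition vscale (a : R) (v : vec) : vec := mkv (a * vx v) (a * vy v) (a * vz v).
Definition dot (u v : vec) : R := vx u * vx v + vy u * vy v + vz u * vz v.
Definition vnorm (v : vec) : R := sqrt (dot v v).
Definition cross (u v : vec) : vec :=
  mkv (vy u * vz v - vz u * vy v)
      (vz u * vx v - vx u * vz v)
      (vx u * vy v - vy u * vx v).

Definition I_open_interval (I : R -> Prop) : Prop :=
  (exists x, I x) /\
  (forall x y z, I x -> I z -> x <= y <= z -> I y) /\
  (forall x, I x -> exists eps : posreal, forall y, Rabs (y - x) < eps -> I y).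

Definition smooth_on (I : R -> Prop) (f : R -> R) : Prop :=
  forall (n : nat) (x : R), I x -> ex_derive_n f n x.

Definition vderive (f : R -> vec) (s : R) (d : vec) : Prop :=
  is_derive (fun t => vx (f t)) s (vx d) /\
  is_derive (fun t => vy (f t)) s (vy d) /\
  is_derive (fun t => vz (f t)) s (vz d).

Definition vex_derive (f : R -> vec) (s : R) : Prop :=
  ex_derive (fun t => vx (f t)) s /\
  ex_derive (fun t => vy (f t)) s /\
  ex_derive (fun t => vz (f t)) s.

Definition vDerive (f : R -> vec) (s : R) : vec :=
  mkv (Derive (fun t => vx (f t)) s)
      (Derive (fun t => vy (f t)) s)
      (Derive (fun t => vz (f t)) s).

Definition darboux_frame (I : R -> Prop) (alpha T V U : R -> vec)
    (kg kn tg : R -> R) : Prop :=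
  forall s, I s ->
    vderive alpha s (T s) /\
    dot (T s) (T s) = 1 /\ dot (U s) (U s) = 1 /\ dot (T s) (U s) = 0 /\
    V s = cross (U s) (T s) /\
    vderive T s (vadd (vscale (kg s) (V s)) (vscale (kn s) (U s))) /\
    vderive V s (vadd (vscale (- kg s) (T s)) (vscale (tg s) (U s))) /\
    vderive U s (vadd (vscale (- kn s) (T s)) (vscale (- tg s) (V s))).

Definition regular_on (I : R -> Prop) (gamma : R -> vec) : Prop :=
  forall s, I s -> vex_derive gamma s /\ vDerive gamma s <> vzero.

Definition general_helix (I : R -> Prop) (gamma : R -> vec) : Prop :=
  exists (d : vec) (c : R), vnorm d = 1 /\
    forall s, I s ->
      dot (vscale (/ vnorm (vDerive gamma s)) (vDerive gamma s)) d = c.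

Definition isophote (I : R -> Prop) (U : R -> vec) : Prop :=
  exists (l : vec) (c : R), vnorm l = 1 /\ forall s, I s -> dot (U s) l = c.

Definition case_a (I : R -> Prop) (alpha V U : R -> vec) (kg kn tg : R -> R)
    (gamma : R -> vec) : Prop :=
  forall s, I s ->
    kn s = 0 /\ kg s <> 0 /\ tg s <> 0 /\
    gamma s = vadd (alpha s)
                (vadd (vscale (/ kg s) (V s))
                      (vscale (- (Derive kg s / (kg s ^ 2 * tg s))) (U s))).

Definition case_b (I : R -> Prop) (alpha V U : R -> vec) (kg kn tg : R -> R)
    (gamma : R -> vec) : Prop :=
  (forall s, I s -> kn s <> 0) /\
  exists (beta B : R -> R) (c8 : R),
    (forall s, I s -> is_derive beta s (kg s * tg s / kn s)) /\
    (forall s, I s -> is_derive B s (exp (beta s) * tg s / kn s)) /\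
    forall s, I s ->
      let y2 := exp (- beta s) * (B s + c8) in
      let y3 := - (kg s / kn s) * y2 + / kn s in
      gamma s = vadd (alpha s) (vadd (vscale y2 (V s)) (vscale y3 (U s))).

(* Main.v *)
Require Import Defs.
From Stdlib Require Import Reals Lra.
From Coquelicot Require Import Coquelicot.
Open Scope R_scope.

Lemma sign_pos_const (I : R -> Prop) (h : R -> R) :
  (forall x y z, I x -> I z -> x <= y <= z -> I y) ->
  (forall s, I s -> continuity_pt h s) ->
  (forall s, I s -> h s <> 0) ->
  forall x y, I x -> I y -> x < y -> 0 < h x -> 0 < h y.
Proof.
  intros Hc Hcont Hnz x y Hx Hy Hxy Hpx.
  destruct (Rlt_or_le 0 (h y)) as [H|H]; auto.
  assert (Hn : h y < 0) by (destruct H; auto; exfalso; apply (Hnz y Hy); auto).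
  destruct (Ranalysis5.IVT_interv (fun t => - h t) x y) as [z [Hz Hz0]]; auto; try lra.
  - intros a Ha. apply continuity_pt_opp. apply Hcont. apply (Hc x a y); auto.
  - exfalso. apply (Hnz z). apply (Hc x z y); auto. lra.
Qed.

Lemma sign_neg_const (I : R -> Prop) (h : R -> R) :
  (forall x y z, I x -> I z -> x <= y <= z -> I y) ->
  (forall s, I s -> continuity_pt h s) ->
  (forall s, I s -> h s <> 0) ->
  forall x y, I x -> I y -> x < y -> h x < 0 -> h y < 0.
Proof.
  intros Hc Hcont Hnz x y Hx Hy Hxy Hpx.
  destruct (Rlt_or_le (h y) 0) as [H|H]; auto.
  assert (Hn : 0 < h y) by (destruct H; auto; exfalso; apply (Hnz y Hy); auto).
  destruct (Ranalysis5.IVT_interv h x y) as [z [Hz Hz0]]; auto; try lra.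
  - intros a Ha. apply Hcont. apply (Hc x a y); auto.
  - exfalso. apply (Hnz z). apply (Hc x z y); auto. lra.
Qed.

Definition sg (a : R) : R := a / Rabs a.

Lemma sg_const (I : R -> Prop) (h : R -> R) :
  (forall x y z, I x -> I z -> x <= y <= z -> I y) ->
  (forall s, I s -> continuity_pt h s) ->
  (forall s, I s -> h s <> 0) ->
  forall x y, I x -> I y -> sg (h x) = sg (h y).
Proof.
  intros Hc Hcont Hnz.
  assert (K : forall x y, I x -> I y -> x < y -> sg (h x) = sg (h y)).
  { intros x y Hx Hy Hxy. unfold sg.
    destruct (Rlt_or_le 0 (h x)) as [H|H].
    - pose proof (sign_pos_const I h Hc Hcont Hnz x y Hx Hy Hxy H).
      rewrite !Rabs_right by lra. field; lra.
    - assert (h x < 0) by (destruct H; auto; exfalso; apply (Hnz x Hx); auto).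
      pose proof (sign_neg_const I h Hc Hcont Hnz x y Hx Hy Hxy H0).
      rewrite !Rabs_left by lra. field; lra. }
  intros x y Hx Hy. destruct (Rtotal_order x y) as [H|[H|H]].
  - auto.
  - subst; auto.
  - symmetry; auto.
Qed.

Lemma sg_sq a : a <> 0 -> sg a * sg a = 1.
Proof. intros. unfold sg. destruct (Rlt_or_le 0 a).
  rewrite Rabs_right by lra. field. auto.
  rewrite Rabs_left by lra. field. lra. Qed.

Lemma vnorm_scale_unit h u : dot u u = 1 -> vnorm (vscale h u) = Rabs h.
Proof. intros H. unfold vnorm. replace (dot (vscale h u) (vscale h u)) with (h * h * dot u u)
  by (unfold dot, vscale, mkv, vx, vy, vz; simpl; ring).
  rewrite H, Rmult_1_r. apply sqrt_Rsqr_abs. Qed.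

Lemma dot_scale_l a u d : dot (vscale a u) d = a * dot u d.
Proof. unfold dot, vscale, mkv, vx, vy, vz; simpl; ring. Qed.

Lemma main_helix (I : R -> Prop) (U gamma : R -> vec) (h : R -> R) :
  I_open_interval I ->
  (forall s, I s -> continuity_pt h s) ->
  (forall s, I s -> h s <> 0) ->
  (forall s, I s -> dot (U s) (U s) = 1) ->
  (forall s, I s -> vDerive gamma s = vscale (h s) (U s)) ->
  (general_helix I gamma <-> isophote I U).
Proof.
  intros [[s0 Hs0] [Hc _]] Hcont Hnz HU Hg.
  assert (E : forall s d, I s -> dot (vscale (/ vnorm (vDerive gamma s)) (vDerive gamma s)) d
     = sg (h s) * dot (U s) d).
  { intros s d Hs. rewrite Hg, vnorm_scale_unit by auto. rewrite !dot_scale_l. unfold sg, Rdiv. ring. }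
  split.
  - intros [d [c [Hd H]]]. exists d, (sg (h s0) * c). split; auto.
    intros s Hs. rewrite <- (H s Hs), E by auto. rewrite (sg_const I h Hc Hcont Hnz s0 s Hs0 Hs).
    rewrite <- Rmult_assoc, sg_sq by auto. ring.
  - intros [l [c [Hl H]]]. exists l, (sg (h s0) * c). split; auto.
    intros s Hs. rewrite E, H by auto. rewrite (sg_const I h Hc Hcont Hnz s0 s Hs0 Hs). auto.
Qed.

Lemma comp_lemma (a v u p q : R -> R) s A kg kn tg p' q' :
  is_derive a s A ->
  is_derive v s (- kg * A + tg * u s) ->
  is_derive u s (- kn * A + - tg * v s) ->
  is_derive p s p' -> is_derive q s q' ->
  1 - p s * kg - q s * kn = 0 -> p' - q s * tg = 0 ->
  is_derive (fun t => a t + (p t * v t + q t * u t)) s ((p s * tg + q') * u s).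
Proof.
  intros Ha Hv Hu Hp Hq E1 E2.
  pose proof (is_derive_mult _ _ _ _ _ Hp Hv (fun n m => Rmult_comm n m)) as H1.
  pose proof (is_derive_mult _ _ _ _ _ Hq Hu (fun n m => Rmult_comm n m)) as H2.
  pose proof (is_derive_plus _ _ _ _ _ H1 H2) as H3.
  pose proof (is_derive_plus _ _ _ _ _ Ha H3) as H4.
  simpl in H4. unfold plus, mult in H4; simpl in H4.
  replace ((p s * tg + q') * u s) with
   (A + (p' * v s + p s * (- kg * A + tg * u s) + (q' * u s + q s * (- kn * A + - tg * v s)))).
  exact H4.
  replace (A + (p' * v s + p s * (- kg * A + tg * u s) + (q' * u s + q s * (- kn * A + - tg * v s))))
   with (A * (1 - p s * kg - q s * kn) + v s * (p' - q s * tg) + (p s * tg + q') * u s) by ring.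
  rewrite E1, E2. ring.
Qed.

Lemma loc_eq (I : R -> Prop) (f g : R -> R) s :
  I_open_interval I -> I s -> (forall t, I t -> f t = g t) ->
  locally s (fun t => f t = g t).
Proof.
  intros [_ [_ Ho]] Hs H. destruct (Ho s Hs) as [eps He].
  exists eps. intros y Hy. apply H, He. exact Hy.
Qed.

Lemma deriv_gen (I : R -> Prop) (alpha T V U gamma : R -> vec) (kg kn tg p q : R -> R) s p' q' :
  I_open_interval I -> I s ->
  darboux_frame I alpha T V U kg kn tg ->
  (forall t, I t -> gamma t = vadd (alpha t) (vadd (vscale (p t) (V t)) (vscale (q t) (U t)))) ->
  is_derive p s p' -> is_derive q s q' ->
  1 - p s * kg s - q s * kn s = 0 -> p' - q s * tg s = 0 ->
  vDerive gamma s = vscale (p s * tg s + q') (U s).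
Proof.
  intros HI Hs HD Hg Hp Hq E1 E2.
  destruct (HD s Hs) as [Ha [_ [_ [_ [_ [_ [Hv Hu]]]]]]].
  destruct Ha as [Ha1 [Ha2 Ha3]]. destruct Hv as [Hv1 [Hv2 Hv3]]. destruct Hu as [Hu1 [Hu2 Hu3]].
  unfold vadd, vscale, mkv, vx, vy, vz in *; simpl in *.
  unfold vDerive, vscale, mkv, vx, vy, vz.
  f_equal; [f_equal|].
  - apply is_derive_unique. eapply is_derive_ext_loc.
    apply (loc_eq I (fun t => fst (fst (alpha t)) + (p t * fst (fst (V t)) + q t * fst (fst (U t))))).
    exact HI. exact Hs. intros t Ht. rewrite (Hg t Ht). reflexivity.
    apply (comp_lemma (fun t => fst (fst (alpha t))) (fun t => fst (fst (V t))) (fun t => fst (fst (U t))) p q s (fst (fst (T s))) (kg s) (kn s) (tg s) p' q'); auto.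
  - apply is_derive_unique. eapply is_derive_ext_loc.
    apply (loc_eq I (fun t => snd (fst (alpha t)) + (p t * snd (fst (V t)) + q t * snd (fst (U t))))).
    exact HI. exact Hs. intros t Ht. rewrite (Hg t Ht). reflexivity.
    apply (comp_lemma (fun t => snd (fst (alpha t))) (fun t => snd (fst (V t))) (fun t => snd (fst (U t))) p q s (snd (fst (T s))) (kg s) (kn s) (tg s) p' q'); auto.
  - apply is_derive_unique. eapply is_derive_ext_loc.
    apply (loc_eq I (fun t => snd (alpha t) + (p t * snd (V t) + q t * snd (U t)))).
    exact HI. exact Hs. intros t Ht. rewrite (Hg t Ht). reflexivity.
    apply (comp_lemma (fun t => snd (alpha t)) (fun t => snd (V t)) (fun t => snd (U t)) p q s (snd (T s)) (kg s) (kn s) (tg s) p' q'); auto.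
Qed.

Ltac deta := repeat match goal with |- context [Derive (fun x => ?f x)] => change (Derive (fun x => f x)) with (Derive f) end.
Ltac side := repeat split; try assumption; try (repeat apply Rmult_integral_contrapositive_currified; try assumption; lra).

Theorem theorem3p24 (I : R -> Prop) (alpha T V U gamma : R -> vec)
    (kg kn tg : R -> R) :
  I_open_interval I ->
  smooth_on I kg -> smooth_on I kn -> smooth_on I tg ->
  darboux_frame I alpha T V U kg kn tg ->
  (case_a I alpha V U kg kn tg gamma \/ case_b I alpha V U kg kn tg gamma) ->
  regular_on I gamma ->
  (general_helix I gamma <-> isophote I U).
Proof.
  intros HI Hkg Hkn Htg HD Hcase Hreg.
  assert (HUU : forall s, I s -> dot (U s) (U s) = 1).
  { intros s Hs. apply (HD s Hs). }
  destruct Hcase as [Ha|Hb].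
  - pose (F := fun x => (Derive (Derive kg) x * (kg x ^ 2 * tg x) - Derive kg x * (2 * kg x * Derive kg x * tg x + kg x ^ 2 * Derive tg x)) / (kg x ^ 2 * tg x) ^ 2).
    pose (h := fun x => / kg x * tg x + - F x).
    assert (Hder : forall s, I s -> vDerive gamma s = vscale (h s) (U s)).
    { intros s Hs. destruct (Ha s Hs) as [Hn0 [Hg0 [Ht0 _]]].
      assert (E1 : ex_derive kg s) by exact (Hkg 1%nat s Hs).
      assert (E2 : ex_derive (Derive kg) s) by exact (Hkg 2%nat s Hs).
      assert (E3 : ex_derive tg s) by exact (Htg 1%nat s Hs).
      apply (deriv_gen I alpha T V U gamma kg kn tg (fun t => / kg t) (fun t => - (Derive kg t / (kg t ^ 2 * tg t))) s (- Derive kg s / kg s ^ 2) (- F s)); auto.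
      + intros t Ht. apply (Ha t Ht).
      + auto_derive. side. deta. field. auto.
      + auto_derive. side. unfold F. deta. field. auto.
      + rewrite Hn0. field. auto.
      + field. auto. }
    apply (main_helix I U gamma h); auto.
    + intros s Hs. destruct (Ha s Hs) as [Hn0 [Hg0 [Ht0 _]]].
      apply (proj2 (continuity_pt_filterlim h s)). apply (ex_derive_continuous (K:=R_AbsRing) (V:=R_NormedModule)). assert (E1 : ex_derive kg s) by exact (Hkg 1%nat s Hs).
      assert (E2 : ex_derive (Derive kg) s) by exact (Hkg 2%nat s Hs).
      assert (E2' : ex_derive (Derive (Derive kg)) s) by exact (Hkg 3%nat s Hs).
      assert (E3 : ex_derive tg s) by exact (Htg 1%nat s Hs).
      assert (E3' : ex_derive (Derive tg) s) by exact (Htg 2%nat s Hs).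
      unfold h, F. auto_derive. side.
    + intros s Hs Hh. destruct (Hreg s Hs) as [_ Hne]. apply Hne. rewrite (Hder s Hs), Hh.
      unfold vscale, vzero, mkv. f_equal; [f_equal|]; ring.
  - destruct Hb as [Hkn0 [beta [B [c8 [Hbeta [HB Hg]]]]]].
    pose (y2 := fun x => exp (- beta x) * (B x + c8)).
    pose (y2d := fun x => - (kg x * tg x / kn x) * (exp (- beta x) * (B x + c8)) + (exp (- beta x) * exp (beta x)) * tg x / kn x).
    pose (y3d := fun x => - ((Derive kg x * kn x - kg x * Derive kn x) / kn x ^ 2) * y2 x - (kg x / kn x) * y2d x - Derive kn x / kn x ^ 2).
    pose (h := fun x => y2 x * tg x + y3d x).
    assert (Hder : forall s, I s -> vDerive gamma s = vscale (h s) (U s)).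
    { intros s Hs. pose proof (Hkn0 s Hs) as Hn0.
      assert (Hee : exp (- beta s) * exp (beta s) = 1).
      { rewrite <- exp_plus. replace (- beta s + beta s) with 0 by ring. apply exp_0. }
      assert (Hb1 : ex_derive beta s) by (eexists; apply Hbeta; auto).
      assert (Hb2 : ex_derive B s) by (eexists; apply HB; auto).
      assert (E1 : ex_derive kg s) by exact (Hkg 1%nat s Hs).
      assert (E4 : ex_derive kn s) by exact (Hkn 1%nat s Hs).
      assert (E3 : ex_derive tg s) by exact (Htg 1%nat s Hs).
      assert (Hdb : Derive beta s = kg s * tg s / kn s) by (apply is_derive_unique; auto).
      assert (HdB : Derive B s = exp (beta s) * tg s / kn s) by (apply is_derive_unique; auto).
      assert (Hp : is_derive (fun t => exp (- beta t) * (B t + c8)) s (y2d s)).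
      { auto_derive. side. deta. rewrite ?Hdb, ?HdB. unfold y3d, y2d, y2. field. auto. }
      assert (Hq : is_derive (fun t => - (kg t / kn t) * (exp (- beta t) * (B t + c8)) + / kn t) s (y3d s)).
      { auto_derive. side. deta. rewrite ?Hdb, ?HdB. unfold y3d, y2d, y2. field. auto. }
      apply (deriv_gen I alpha T V U gamma kg kn tg (fun t => exp (- beta t) * (B t + c8)) (fun t => - (kg t / kn t) * (exp (- beta t) * (B t + c8)) + / kn t) s (y2d s) (y3d s) HI Hs HD).
      + intros t Ht. pose proof (Hg t Ht) as Hgt. cbv zeta in Hgt. exact Hgt.
      + exact Hp.
      + exact Hq.
      + field. auto.
      + unfold y2d. rewrite Hee. field. auto. }
    apply (main_helix I U gamma h); auto.
    + intros s Hs. pose proof (Hkn0 s Hs) as Hn0.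
      apply (proj2 (continuity_pt_filterlim h s)). apply (ex_derive_continuous (K:=R_AbsRing) (V:=R_NormedModule)). assert (E1 : ex_derive kg s) by exact (Hkg 1%nat s Hs).
      assert (E2 : ex_derive (Derive kg) s) by exact (Hkg 2%nat s Hs).
      assert (E4 : ex_derive kn s) by exact (Hkn 1%nat s Hs).
      assert (E5 : ex_derive (Derive kn) s) by exact (Hkn 2%nat s Hs).
      assert (E3 : ex_derive tg s) by exact (Htg 1%nat s Hs).
      assert (Hb1 : ex_derive beta s) by (eexists; apply Hbeta; auto).
      assert (Hb2 : ex_derive B s) by (eexists; apply HB; auto).
      unfold h, y3d, y2d, y2. auto_derive. side.
    + intros s Hs Hh. destruct (Hreg s Hs) as [_ Hne]. apply Hne. rewrite (Hder s Hs), Hh.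
      unfold vscale, vzero, mkv. f_equal; [f_equal|]; ring.
Qed.
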